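(* Let $X$ be a nonsingular projective toric variety and let $\beta\in H_2(X,\mathbb{Z})$ be nonzero. If the toric divisors $D$ of $X$ with $\int_\beta D<0$ have nonempty common intersection, then $\int_\beta A>0$ for every ample divisor $A$ on $X$.
   Context: Toric divisors are the torus-invariant prime divisors of $X$, in bijection with the rays of the fan of $X$. The common intersection of an empty family of divisors is $X$ itself. *)

(* Defs.v *)
(* Combinatorial model of a nonsingular projective toric
   variety X via its (smooth, complete, polytopal) fan in N = Z^n. *)
From HB Require Import structures.
From mathcomp Require Import all_boot all_order all_algebra.
Set Implicit Arguments. Unset Strict Implicit. Unset Printing Implicit Defensive.
Import Order.TTheory GRing.Theory Num.Theory.
Local Open Scope ring_scope.

(* Rays of the fan are indexed by 'I_r, with primitive generators u i in N = Z^n.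
   The fan is given by its set S of maximal cones, each a set of ray indices. *)

Definition dotz (n : nat) (m v : 'rV[int]_n) : int := \sum_(k < n) m 0 k * v 0 k.

Definition ratv (n : nat) (v : 'rV[int]_n) : 'rV[rat]_n := map_mx (fun z : int => z%:~R) v.

Definition in_cone (n r : nat) (u : 'I_r -> 'rV[int]_n) (s : {set 'I_r}) (x : 'rV[rat]_n) : Prop :=
  exists l : 'I_r -> rat, (forall i, 0 <= l i) /\ (forall i, i \notin s -> l i = 0) /\
    x = \sum_(i < r) l i *: ratv (u i).

Definition Zbasis (n r : nat) (u : 'I_r -> 'rV[int]_n) (s : {set 'I_r}) : Prop :=
  (forall x : 'rV[int]_n, exists l : 'I_r -> int,
      (forall i, i \notin s -> l i = 0) /\ x = \sum_(i < r) l i *: u i) /\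
  (forall l l' : 'I_r -> int, (forall i, i \notin s -> l i = 0) ->
      (forall i, i \notin s -> l' i = 0) ->
      \sum_(i < r) l i *: u i = \sum_(i < r) l' i *: u i -> forall i, l i = l' i).

Record smooth_complete_fan (n r : nat) (u : 'I_r -> 'rV[int]_n) (S : {set {set 'I_r}}) : Prop := {
  fan_rays_inj : injective u;
  fan_rays_used : forall i, exists2 s, s \in S & i \in s;
  fan_smooth : forall s, s \in S -> Zbasis u s;
  fan_faces : forall s t x, s \in S -> t \in S -> in_cone u s x -> in_cone u t x ->
                in_cone u (s :&: t) x;
  fan_complete : forall x : 'rV[rat]_n, exists2 s, s \in S & in_cone u s x
}.

(* torus-invariant divisor sum_i a i D_i is ample iff its support function is
   strictly convex on the fan (Cox-Little-Schenck, Thm 6.1.14) *)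
Definition ample (n r : nat) (u : 'I_r -> 'rV[int]_n) (S : {set {set 'I_r}}) (a : 'I_r -> int) : Prop :=
  forall s, s \in S -> exists m : 'rV[int]_n,
    (forall i, i \in s -> dotz m (u i) = - a i) /\
    (forall j, j \notin s -> dotz m (u j) > - a j).

Definition projective_fan (n r : nat) (u : 'I_r -> 'rV[int]_n) (S : {set {set 'I_r}}) : Prop :=
  exists a, ample u S a.

(* H_2(X,Z) = Z-linear relations among ray generators; c i = int_beta D_i *)
Definition in_H2 (n r : nat) (u : 'I_r -> 'rV[int]_n) (c : 'I_r -> int) : Prop :=
  \sum_(i < r) c i *: u i = 0.

Definition degree (r : nat) (c a : 'I_r -> int) : int := \sum_(i < r) a i * c i.

(* the toric divisors D_i, i in I, have nonempty common intersection iff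
   the rays in I span a cone of the fan (empty I: X itself, nonempty) *)
Definition divisors_meet (n r : nat) (u : 'I_r -> 'rV[int]_n) (S : {set {set 'I_r}}) (I : {set 'I_r}) : Prop :=
  exists2 s, s \in S & I \subset s.

(* Main.v *)
Require Import Defs.
From mathcomp Require Import all_boot all_order all_algebra.
Import Order.TTheory GRing.Theory Num.Theory.
Local Open Scope ring_scope.

Lemma dotz_sum (n r : nat) (m : 'rV[int]_n) (u : 'I_r -> 'rV[int]_n) (c : 'I_r -> int) :
  \sum_(i < r) dotz m (u i) * c i = dotz m (\sum_(i < r) c i *: u i).
Proof.
rewrite /dotz.
under eq_bigr => i _ do rewrite mulr_suml.
rewrite exchange_big /=; apply: eq_bigr => k _.
rewrite summxE mulr_sumr; apply: eq_bigr => i _.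
by rewrite mxE mulrCA mulrC.
Qed.

Theorem proposition2p1 (n r : nat) (u : 'I_r -> 'rV[int]_n) (S : {set {set 'I_r}})
  (Hfan : smooth_complete_fan u S) (Hproj : projective_fan u S)
  (beta : 'I_r -> int) (Hbeta : in_H2 u beta) (Hnz : exists i, beta i != 0)
  (Hmeet : divisors_meet u S [set i | beta i < 0]) :
  forall a : 'I_r -> int, ample u S a -> 0 < degree beta a.
Proof.
move=> a Ha.
case: Hmeet => s sS Hsub.
have [m [Hin Hout]] := Ha s sS.
set f := fun i => a i + dotz m (u i).
have Hdeg : degree beta a = \sum_(i < r) f i * beta i.
  rewrite /f.
  under [RHS]eq_bigr => i _ do rewrite mulrDl.
  rewrite big_split /= dotz_sum Hbeta.
  have -> : dotz m 0 = 0 by rewrite /dotz big1 // => k _; rewrite mxE mulr0.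
  by rewrite addr0.
have Hbge : forall j, j \notin s -> 0 <= beta j.
  move=> j js; rewrite leNgt; apply/negP => bj.
  by move/subsetP: Hsub => /(_ j); rewrite inE bj => /(_ isT); rewrite (negbTE js).
have Hfpos : forall j, j \notin s -> 0 < f j.
  by move=> j js; have := Hout j js; rewrite /f -subr_gt0 opprK addrC.
have Hf0 : forall i, i \in s -> f i = 0.
  by move=> i is_; rewrite /f Hin // addrN.
have [j js bj] : exists2 j, j \notin s & beta j != 0.
  case: (boolP [exists j, (j \notin s) && (beta j != 0)]).
    by case/existsP => j /andP[] js bj; exists j.
  move/existsPn => H.
  have Hz : forall i, i \notin s -> beta i = 0.
    by move=> i is_; have := H i; rewrite is_ /= negbK => /eqP.
  have [_ Huniq] := fan_smooth Hfan sS.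
  have := Huniq beta (fun _ => 0) Hz (fun _ _ => erefl).
  have E : \sum_(i < r) beta i *: u i = \sum_(i < r) (fun _ : 'I_r => 0 : int) i *: u i.
    by rewrite Hbeta big1 // => i _; rewrite scale0r.
  move=> /(_ E) Hb0; case: Hnz => i; by rewrite Hb0 eqxx.
rewrite Hdeg (bigD1 j) //=.
apply: ltr_pwDl.
  rewrite mulr_gt0 ?Hfpos //.
  by rewrite lt_neqAle eq_sym bj Hbge.
apply: sumr_ge0 => i _.
case: (boolP (i \in s)) => is_; first by rewrite Hf0 // mul0r.
by rewrite mulr_ge0 ?Hbge // ltW ?Hfpos.
Qed.
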